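(* Let $k\in\mathbb{N}$ and $n=3k+1$. Then $D_{\mathrm{lin}}(\mathrm{MINCUT}_n)\ge 2n-2$; that is, any deterministic linear query algorithm that correctly computes the minimum cut weight of every $n$-vertex weighted undirected graph must make at least $2n-2$ linear queries in the worst case.
   Context: An $n$-vertex weighted undirected graph $G=(V,w)$ is given by a vector $w\in\mathbb{R}_{\ge 0}^{\binom{n}{2}}$ assigning a nonnegative weight to each unordered pair of distinct vertices; for $\emptyset\ne X\subsetneq V$ the cut $\Delta(X)$ has weight equal to the sum of $w$ over pairs with exactly one endpoint in $X$. In $\mathrm{MINCUT}_n$ the input is such a graph and the required output is the minimum weight of a cut. A linear query is a vector $x\in\mathbb{R}^{\binom n2}$ and is answered by $\langle x,w\rangle$; queries may be chosen adaptively. $D_{\mathrm{lin}}(\mathrm{MINCUT}_n)$ is the minimum, over deterministic linear query algorithms that output the correct answer on every $n$-vertex weighted graph, of the maximum over inputs of the number of queries made. *)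

(* Defs.v *)
From HB Require Import structures.
From mathcomp Require Import all_boot all_order all_algebra.
From mathcomp Require Import reals.
Set Implicit Arguments. Unset Strict Implicit. Unset Printing Implicit Defensive.
Import Order.TTheory GRing.Theory Num.Theory.
Local Open Scope ring_scope.

(* Unordered pairs of distinct vertices of V = 'I_n, represented as (i,j) with i < j. *)
Definition Pair (n : nat) : finType := {p : 'I_n * 'I_n | (p.1 < p.2)%N}.

Definition cut_weight (R : realType) (n : nat) (w : Pair n -> R) (X : {set 'I_n}) : R :=
  \sum_(p : Pair n | (val p).1 \in X != ((val p).2 \in X)) w p.

Definition proper_nonempty (n : nat) (X : {set 'I_n}) : bool :=
  (X != set0) && (X != [set: 'I_n]).

Definition is_mincut (R : realType) (n : nat) (w : Pair n -> R) (v : R) : Prop :=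
  (exists X : {set 'I_n}, proper_nonempty X /\ cut_weight w X = v) /\
  (forall X : {set 'I_n}, proper_nonempty X -> v <= cut_weight w X).

Definition lin_answer (R : realType) (n : nat) (x w : Pair n -> R) : R :=
  \sum_(p : Pair n) x p * w p.

(* Deterministic adaptive linear query algorithms as decision trees: either
   output a value, or ask a linear query x and continue depending on the answer. *)
Inductive qtree (R : Type) (n : nat) : Type :=
| Leaf : R -> qtree R n
| Query : (Pair n -> R) -> (R -> qtree R n) -> qtree R n.

Fixpoint run (R : realType) (n : nat) (t : qtree R n) (w : Pair n -> R) : R :=
  match t with
  | Leaf v => v
  | Query x k => run (k (lin_answer x w)) w
  end.

Fixpoint num_queries (R : realType) (n : nat) (t : qtree R n) (w : Pair n -> R) : nat :=
  match t with
  | Leaf _ => 0%N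
  | Query x k => (num_queries (k (lin_answer x w)) w).+1
  end.

Definition nonneg_weights (R : realType) (n : nat) (w : Pair n -> R) : Prop :=
  forall p, 0 <= w p.

Definition solves_mincut (R : realType) (n : nat) (t : qtree R n) : Prop :=
  forall w : Pair n -> R, nonneg_weights w -> is_mincut w (run t w).

(* Main.v *)
Require Import Defs.
From mathcomp Require Import all_boot all_order all_algebra.
From mathcomp Require Import reals.
From HB Require Import structures.
From mathcomp Require Import ring lra zify.

Module PA.
Set Implicit Arguments. Unset Strict Implicit. Unset Printing Implicit Defensive.
Import Order.TTheory GRing.Theory Num.Theory.
Local Open Scope ring_scope.

Section Generic.
Variables (R : realType) (n : nat).

Definition addsv (w v : Pair n -> R) (s : R) : Pair n -> R := fun p => w p + s * v p.

Lemma lin_addsv x w v s :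
  lin_answer x (addsv w v s) = lin_answer x w + s * lin_answer x v.
Proof.
rewrite /lin_answer /addsv mulr_sumr -big_split /=; apply: eq_big => // p _.
by rewrite mulrDr mulrCA.
Qed.

Fixpoint qsq (t : qtree R n) (w : Pair n -> R) : seq (Pair n -> R) :=
  match t with
  | Leaf _ => [::]
  | Query x k => x :: qsq (k (lin_answer x w)) w
  end.

Lemma size_qsq t w : size (qsq t w) = num_queries t w.
Proof. by elim: t => //= x k IH; rewrite IH. Qed.

Lemma run_inv t w v s :
  (forall a, (a < size (qsq t w))%N -> lin_answer (nth (fun=> 0) (qsq t w) a) v = 0) ->
  run t (addsv w v s) = run t w.
Proof.
elim: t => //= x k IH H.
rewrite lin_addsv (H 0%N) // mulr0 addr0; apply: IH => a Ha.
exact: (H a.+1).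
Qed.

End Generic.

Section Kernel.
Variable R : realType.

Lemma kernel_ex (m q : nat) (F : nat -> 'I_m -> R) : (q < m)%N ->
  exists c : 'I_m -> R, (exists i, c i != 0) /\
    forall a, (a < q)%N -> \sum_i F a i * c i = 0.
Proof.
move=> qm.
pose A : 'M[R]_(m, q) := \matrix_(i, a) F a i.
pose K := kermx A.
have KA : K *m A = 0 by exact: mulmx_ker.
have : K != 0.
  apply/eqP => K0.
  have := mxrank_ker A; rewrite -/K K0 mxrank0 => /esym/eqP.
  rewrite subn_eq0 => /(leq_trans)/(_ (rank_leq_col A)).
  by rewrite leqNgt qm.
case/matrix0Pn => r [i Kri].
exists (fun i => K r i); split; first by exists i.
move=> a aq.
have := congr1 (fun M : 'M_(m, q) => M r (Ordinal aq)) KA.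
rewrite !mxE => H; rewrite -[RHS]H; apply: eq_big => // j _. by rewrite mulrC; congr (_ * _); rewrite /A mxE.
Qed.

End Kernel.

End PA.
Import PA.

Module PB.
Set Implicit Arguments. Unset Strict Implicit. Unset Printing Implicit Defensive.
Import Order.TTheory GRing.Theory Num.Theory.
Local Open Scope ring_scope.

Section Cut.
Variables (R : realType) (n : nat).
Definition cross (X : {set 'I_n}) (p : Pair n) : bool :=
  ((val p).1 \in X) != ((val p).2 \in X).

Lemma cut_ge_sub (w : Pair n -> R) X (S : {set Pair n}) :
  (forall p, 0 <= w p) -> (forall p, p \in S -> cross X p) ->
  \sum_(p in S) w p <= cut_weight w X.
Proof.
move=> w0 SX; rewrite /cut_weight [leRHS](bigID (mem S)) /=.
rewrite [X in X + _](_ : _ = \sum_(p in S) w p); last first.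
  apply: eq_bigl => p; apply/andP/idP => [[] //|pS]; split=> //; exact: SX.
rewrite lerDl; apply: sumr_ge0 => p _; exact: w0.
Qed.

Lemma cut_eq_sub (w : Pair n -> R) X (S : {set Pair n}) :
  (forall p, p \in S -> cross X p) ->
  (forall p, cross X p -> p \notin S -> w p = 0) ->
  cut_weight w X = \sum_(p in S) w p.
Proof.
move=> SX Z; rewrite /cut_weight (bigID (mem S)) /=.
rewrite [X in _ + X]big1 ?addr0; last by move=> p /andP[]; exact: Z.
apply: eq_bigl => p; apply/andP/idP => [[] //|pS]; split=> //; exact: SX.
Qed.
End Cut.

End PB.
Import PB.

Module PC.
Set Implicit Arguments. Unset Strict Implicit. Unset Printing Implicit Defensive.
Import Order.TTheory GRing.Theory Num.Theory.

Definition vx (j l : nat) : nat := if l == 0%N then 0%N else (3*j + l)%N.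
Definition ends (e : nat) : nat * nat :=
  match e with 0 => (0,1) | 1 => (0,2) | 2 => (0,3) | 3 => (1,2) | 4 => (1,3) | _ => (2,3) end%N.
Definition ea (i : nat) := vx (i %/ 6) (ends (i %% 6)).1.
Definition eb (i : nat) := vx (i %/ 6) (ends (i %% 6)).2.

Lemma ends_prop e : (e < 6)%N -> ((ends e).1 < (ends e).2 <= 3)%N.
Proof. by case: e => [|[|[|[|[|[|e]]]]]]. Qed.

Lemma vx_bound j l (k : nat) : (j < k)%N -> (l <= 3)%N -> (vx j l <= 3 * k)%N.
Proof. rewrite /vx; case: eqP => _; lia. Qed.

Lemma eab i k : (i < 6*k)%N -> (ea i < eb i)%N && (eb i <= 3*k)%N.
Proof.
rewrite /ea /eb => hi.
have hj : (i %/ 6 < k)%N by lia.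
move: (i %/ 6) (i %% 6) hj (ltn_mod i 6) => j e hj.
by case: e => [|[|[|[|[|[|e]]]]]] //= _; rewrite /vx /=; lia.
Qed.

Lemma ea_shape i : (ea i = 0%N \/ (3 * (i %/ 6) < ea i <= 3 * (i %/ 6) + 3)%N).
Proof.
rewrite /ea; move: (i %/ 6) (i %% 6) (ltn_mod i 6) => j e.
by case: e => [|[|[|[|[|[|e]]]]]] //= _; rewrite /vx /=; [left|left|left|right;lia..].
Qed.

Lemma eb_shape i : (3 * (i %/ 6) < eb i <= 3 * (i %/ 6) + 3)%N.
Proof.
rewrite /eb; move: (i %/ 6) (i %% 6) (ltn_mod i 6) => j e.
by case: e => [|[|[|[|[|[|e]]]]]] //= _; rewrite /vx /=; lia.
Qed.

Lemma eab_inj i i' : ea i = ea i' -> eb i = eb i' -> i = i'.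
Proof.
move=> h1 h2; rewrite (divn_eq i 6) (divn_eq i' 6).
suff [-> ->] : i %/ 6 = i' %/ 6 /\ i %% 6 = i' %% 6 by [].
move: h1 h2; rewrite /ea /eb.
move: (i %/ 6) (i %% 6) (ltn_mod i 6) (i' %/ 6) (i' %% 6) (ltn_mod i' 6) => j e he j' e' he'.
case: e he => [|[|[|[|[|[|e]]]]]] // _; case: e' he' => [|[|[|[|[|[|e']]]]]] // _;
  rewrite /vx /= => h1 h2; lia.
Qed.

Lemma div6 j e : (e < 6)%N -> (6 * j + e) %/ 6 = j /\ (6 * j + e) %% 6 = e.
Proof. by move=> he; rewrite mulnC divnMDl // divn_small // addn0 modnMDl modn_small. Qed.

Lemma ea6 j e : (e < 6)%N -> ea (6 * j + e) = vx j (ends e).1 /\ eb (6 * j + e) = vx j (ends e).2.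
Proof. by move=> /(div6 j) [h1 h2]; rewrite /ea /eb h1 h2. Qed.

Local Open Scope ring_scope.

Lemma sum6 (R : realType) (P : nat -> bool) (F : nat -> R) :
  \sum_(e < 6 | P e) F e =
  (if P 0%N then F 0%N else 0) + (if P 1%N then F 1%N else 0) + (if P 2%N then F 2%N else 0)
  + (if P 3%N then F 3%N else 0) + (if P 4%N then F 4%N else 0) + (if P 5%N then F 5%N else 0).
Proof. by rewrite big_mkcond /= !big_ord_recl big_ord0 /= !addrA addr0. Qed.

Section Block.
Variables (R : realType) (k : nat).
Local Notation n := (3 * k).+1.
Variable p0 : Pair n.

Definition vo (m : nat) : 'I_n := inord m.
Lemma voK m : (m <= 3 * k)%N -> nat_of_ord (vo m) = m.
Proof. by move=> h; rewrite /vo (@inordK (3*k) m). Qed.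

Definition edgeN (i : nat) : Pair n := insubd p0 (vo (ea i), vo (eb i)).

Lemma val_edgeN i : (i < 6 * k)%N -> val (edgeN i) = (vo (ea i), vo (eb i)).
Proof.
move=> hi; have /andP[h1 h2] := eab hi.
rewrite /edgeN insubdK // unfold_in /= /vo.
rewrite (@inordK (3*k) (ea i)) ?(@inordK (3*k) (eb i)); lia.
Qed.

Lemma edgeN_inj i i' : (i < 6 * k)%N -> (i' < 6 * k)%N -> edgeN i = edgeN i' -> i = i'.
Proof.
move=> hi hi' /(congr1 val); rewrite !val_edgeN // => -[h1 h2].
have /andP[a1 a2] := eab hi; have /andP[b1 b2] := eab hi'.
apply: eab_inj.
  by move/(congr1 val): h1; rewrite /= !voK //; lia.
by move/(congr1 val): h2; rewrite /= !voK //; lia.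
Qed.

Definition gX (X : {set 'I_n}) j l := vo (vx j l) \in X.

Lemma cross_edge X j e : (j < k)%N -> (e < 6)%N ->
  cross X (edgeN (6 * j + e)) = (gX X j (ends e).1 != gX X j (ends e).2).
Proof.
move=> hj he; rewrite /cross val_edgeN; last lia.
by case: (ea6 j he) => -> ->.
Qed.

Definition Bj X j : {set Pair n} :=
  [set edgeN (6 * j + val e) | e in [set e : 'I_6 | cross X (edgeN (6 * j + e))]].

Lemma sum_Bj (w : Pair n -> R) X j : (j < k)%N ->
  \sum_(p in Bj X j) w p =
  \sum_(e < 6 | gX X j (ends e).1 != gX X j (ends e).2) w (edgeN (6 * j + e)).
Proof.
move=> hj; rewrite /Bj big_imset /=; last first.
  move=> e e' _ _ /edgeN_inj h; apply: ord_inj; have he := ltn_ord e; have he' := ltn_ord e'.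
  have := h ltac:(lia) ltac:(lia); lia.
apply: eq_bigl => e; rewrite inE cross_edge //.
Qed.

Lemma Bj_cross X j p : p \in Bj X j -> cross X p.
Proof. by case/imsetP => e; rewrite inE => ? ->. Qed.
End Block.

End PC.
Import PC.

Module PD.
Set Implicit Arguments. Unset Strict Implicit. Unset Printing Implicit Defensive.
Import Order.TTheory GRing.Theory Num.Theory.

Definition loc (j x : nat) : nat := if (3 * j < x <= 3 * j + 3)%N then (x - 3 * j)%N else 0%N.

Lemma loc_vx j l : (l <= 3)%N -> loc j (vx j l) = l.
Proof.
by case: l => [|[|[|[|l]]]] //= _; rewrite /loc /vx /=; case: ifP => h; lia.
Qed.

Lemma loc_ne0 j x : loc j x <> 0%N -> (3 * j < x <= 3 * j + 3)%N.
Proof. by rewrite /loc; case: ifP. Qed.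

Local Open Scope ring_scope.

Section Main.
Variables (R : realType) (k : nat).
Local Notation n := (3 * k).+1.
Variable p0 : Pair n.
Local Notation edgeN := (edgeN p0).

Definition Img : {set Pair n} := [set edgeN (val t) | t : 'I_(6 * k)].
Definition w0 (p : Pair n) : R := if p \in Img then 1 else 0.
Definition vc (c : 'I_(6 * k) -> R) (p : Pair n) : R :=
  \sum_(t : 'I_(6 * k)) (edgeN t == p)%:R * c t.

Lemma w0_ge0 p : 0 <= w0 p.
Proof. by rewrite /w0; case: ifP. Qed.

Lemma in_Img i : (i < 6 * k)%N -> edgeN i \in Img.
Proof. by move=> hi; apply/imsetP; exists (Ordinal hi). Qed.

Lemma w0_edge i : (i < 6 * k)%N -> w0 (edgeN i) = 1.
Proof. by move=> hi; rewrite /w0 in_Img. Qed.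

Lemma vc_edge c (t : 'I_(6 * k)) : vc c (edgeN t) = c t.
Proof.
rewrite /vc (bigD1 t) //= eqxx mul1r big1 ?addr0 // => t' ht'.
case: eqP => [/edgeN_inj h|]; last by rewrite mul0r.
by move: ht'; rewrite (ord_inj (h (ltn_ord t') (ltn_ord t))) eqxx.
Qed.

Lemma vc_out c p : p \notin Img -> vc c p = 0.
Proof.
move=> hp; rewrite /vc big1 // => t _; case: eqP => [h|]; last by rewrite mul0r.
by move: hp; rewrite -h in_Img.
Qed.

Lemma lin_vc c x : lin_answer x (vc c) = \sum_(t : 'I_(6 * k)) x (edgeN t) * c t.
Proof.
rewrite /lin_answer /vc.
under eq_bigr do rewrite mulr_sumr.
rewrite exchange_big /=; apply: eq_big => // t _.
rewrite (bigD1 (edgeN t)) //= eqxx mul1r big1 ?addr0 // => p hp.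
by rewrite eq_sym (negbTE hp) mul0r mulr0.
Qed.

Definition Yf (j : nat) (f : nat -> bool) : {set 'I_n} := [set x : 'I_n | f (loc j x)].

Lemma gX_Yf j f l : (j < k)%N -> (l <= 3)%N -> gX (Yf j f) j l = f l.
Proof.
move=> hj hl; rewrite /gX inE voK ?loc_vx //; exact: vx_bound.
Qed.

Lemma edgeN_Bj X j t : (t < 6 * k)%N -> (t %/ 6 = j)%N -> cross X (edgeN t) ->
  edgeN t \in Bj p0 X j.
Proof.
move=> ht htj hc.
have E : (6 * j + t %% 6 = t)%N by rewrite -htj mulnC -divn_eq.
by apply/imsetP; exists (Ordinal (ltn_mod t 6)); rewrite ?inE /= E.
Qed.

Lemma cut_Yf (w : Pair n -> R) j f : (j < k)%N -> f 0%N = false ->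
  (forall p, p \notin Img -> w p = 0) ->
  cut_weight w (Yf j f) = \sum_(p in Bj p0 (Yf j f) j) w p.
Proof.
move=> hj f0 wz; apply: cut_eq_sub; first by move=> p; exact: Bj_cross.
move=> p hc hB; case: (boolP (p \in Img)) => [|/wz //].
case/imsetP => t _ pe; move: hc hB; rewrite pe => hc hB.
have ht := ltn_ord t.
suff htj : (t %/ 6 = j)%N by move: hB; rewrite edgeN_Bj.
have key : forall x : nat, (x <= 3 * k)%N -> vo k x \in Yf j f -> (3 * j < x <= 3 * j + 3)%N.
  move=> x hx; rewrite inE voK // => hf; apply: loc_ne0 => h0; move: hf; rewrite h0 f0.
  done.
have /andP[h1 h2] := eab ht.
have sa := ea_shape t; have sb := eb_shape t.
move: hc; rewrite /cross val_edgeN //=.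
case: (boolP (vo k (ea t) \in Yf j f)) => [/key ha _|_ /= hb].
  have {}ha := ha ltac:(lia). case: sa => [sa|sa]; lia.
have {}hb := key (eb t) ltac:(lia) ltac:(by move: hb; case: (_ \in _)). lia.
Qed.

Lemma lower3 (X : {set 'I_n}) : proper_nonempty X -> 3 <= cut_weight w0 X.
Proof.
case/andP => Xn0 XnT.
have [y hy] : exists y : 'I_n, (y \in X) != (ord0 \in X).
  case: (boolP (ord0 \in X)) => h0.
    move: XnT; rewrite -properT => /properP [_ [y _ hy]].
    by exists y; rewrite (negbTE hy).
  by case/set0Pn: Xn0 => y hy; exists y; rewrite hy.
have y0 : (y : nat) <> 0%N.
  by move=> h; move: hy; rewrite (_ : y = ord0) ?eqxx //; apply: val_inj.
have hyn := ltn_ord y.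
have [j [l [hj [hl1 [hl3 hyl]]]]] :
    exists j l, (j < k)%N /\ (1 <= l)%N /\ (l <= 3)%N /\ (y : nat) = (3 * j + l)%N.
  have := divn_eq y.-1 3; have := ltn_mod y.-1 3.
  move: (y.-1 %/ 3)%N (y.-1 %% 3)%N => a b hb hd.
  exists a, b.+1; split; lia.
have g0 : gX X j 0 = (ord0 \in X).
  by rewrite /gX (_ : vo k (vx j 0) = ord0) //; apply: ord_inj; rewrite voK.
have gl : gX X j l = (y \in X).
  rewrite /gX (_ : vo k (vx j l) = y) //; apply: ord_inj.
  rewrite voK /vx; case: eqP; lia.
have hy' : gX X j 0 != gX X j l by rewrite g0 gl eq_sym.
have H : \sum_(p in Bj p0 X j) w0 p <= cut_weight w0 X.
  by apply: cut_ge_sub; [exact: w0_ge0 | move=> p; exact: Bj_cross].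
apply: le_trans H; rewrite sum_Bj //.
rewrite (eq_bigr (fun _ => 1)); last by move=> e _; rewrite w0_edge //; have := ltn_ord e; lia.
rewrite (sum6 (fun e => gX X j (ends e).1 != gX X j (ends e).2) (fun _ => 1)) /=.
clear gl hyl; move: hy' hl1 hl3; case: l => [|[|[|[|l]]]] // hy' _ _;
  move: hy'; move: (gX X j 0) (gX X j 1) (gX X j 2) (gX X j 3);
  do 4 case; rewrite /= => // _; lra.
Qed.

Lemma cut_local c s j f : (j < k)%N -> f 0%N = false ->
  cut_weight (addsv w0 (vc c) s) (Yf j f) =
  (if f 0%N != f 1%N then 1 + s * vc c (edgeN (6 * j + 0)) else 0) +
  (if f 0%N != f 2%N then 1 + s * vc c (edgeN (6 * j + 1)) else 0) +
  (if f 0%N != f 3%N then 1 + s * vc c (edgeN (6 * j + 2)) else 0) +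
  (if f 1%N != f 2%N then 1 + s * vc c (edgeN (6 * j + 3)) else 0) +
  (if f 1%N != f 3%N then 1 + s * vc c (edgeN (6 * j + 4)) else 0) +
  (if f 2%N != f 3%N then 1 + s * vc c (edgeN (6 * j + 5)) else 0).
Proof.
move=> hj f0; rewrite cut_Yf //; last first.
  by move=> p hp; rewrite /addsv /w0 (negbTE hp) vc_out // mulr0 addr0.
rewrite sum_Bj //.
rewrite (eq_bigl (fun e : 'I_6 => f (ends e).1 != f (ends e).2)); last first.
  move=> e; have /ends_prop/andP[h1 h2] := ltn_ord e.
  by rewrite !gX_Yf //; lia.
rewrite (eq_bigr (fun e : 'I_6 => 1 + s * vc c (edgeN (6 * j + e)))); last first.
  by move=> e _; rewrite /addsv w0_edge //; have := ltn_ord e; lia.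
by rewrite (sum6 (fun e => f (ends e).1 != f (ends e).2) (fun e => 1 + s * vc c (edgeN (6 * j + e)))).
Qed.

Lemma Yf_proper j f l : (j < k)%N -> f 0%N = false -> (1 <= l <= 3)%N -> f l ->
  proper_nonempty (Yf j f).
Proof.
move=> hj f0 /andP[hl1 hl3] fl; apply/andP; split.
  by apply/set0Pn; exists (vo k (vx j l)); have := gX_Yf f hj hl3; rewrite /gX fl.
apply/eqP => h; have : (ord0 : 'I_n) \in Yf j f by rewrite h inE.
by rewrite inE /loc /= f0.
Qed.

Lemma no_small (t : qtree R n) : solves_mincut t -> (num_queries t w0 < 6 * k)%N -> False.
Proof.
move=> hs hq.
have [c [[i0 ci0] hc]] := @kernel_ex R (6 * k) (size (qsq t w0))
  (fun a (i : 'I_(6 * k)) => nth (fun=> 0) (qsq t w0) a (edgeN i)) ltac:(by rewrite size_qsq).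
have inv s : run t (addsv w0 (vc c) s) = run t w0.
  by apply: run_inv => a ha; rewrite lin_vc; exact: hc.
have [[X0 [pX0 hX0]] _] := hs w0 w0_ge0.
have r3 : 3 <= run t w0 by rewrite -hX0; exact: lower3.
suff [s [Y [hY [hw1 hcut]]]] : exists s Y, proper_nonempty Y /\
    nonneg_weights (addsv w0 (vc c) s) /\ cut_weight (addsv w0 (vc c) s) Y < 3.
  have [_ hmin] := hs _ hw1; have := hmin Y hY; rewrite inv => h; lra.
have [i1 _ hmax] := @arg_maxP _ R _ i0 predT (fun i => `|c i|) isT.
set M := `|c i1|.
have Mpos : 0 < M.
  apply: lt_le_trans (hmax i0 isT); by rewrite normr_gt0.
have c1 : c i1 != 0 by rewrite -normr_gt0.
have bnd p : `|vc c p| <= M.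
  case: (boolP (p \in Img)) => [/imsetP [t' _ ->]|hp]; last by rewrite vc_out ?normr0 ?ltW.
  by rewrite vc_edge; exact: hmax.
set s0 := (c i1)^-1.
have nn (sg : R) : `|sg| = 1 -> nonneg_weights (addsv w0 (vc c) (sg * s0)).
  move=> hsg p; rewrite /addsv /w0; case: ifP => hp; last first.
    by rewrite vc_out ?hp // mulr0 addr0.
  have : `|sg * s0 * vc c p| <= 1.
    rewrite !normrM hsg mul1r normrV ?unitfE // -/M.
    by rewrite mulrC ler_pdivrMr // mul1r.
  by rewrite ler_norml => /andP[h _]; lra.
set j := (i1 %/ 6)%N.
have hj : (j < k)%N by have := ltn_ord i1; rewrite /j; lia.
have hi1 : (6 * j + i1 %% 6 = i1)%N by rewrite /j mulnC -divn_eq.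
have he1 : (i1 %% 6 < 6)%N := ltn_mod i1 6.
have ae1 : vc c (edgeN (6 * j + i1 %% 6)) = c i1 by rewrite hi1 vc_edge.
have s0c : s0 * c i1 = 1 by rewrite mulVf.
have s0n0 : s0 != 0 by rewrite invr_eq0.
have caseA (f : nat -> bool) d l : (1 <= l <= 3)%N -> f l -> f 0%N = false ->
    (forall s, cut_weight (addsv w0 (vc c) s) (Yf j f) = 3 + s * d) -> d != 0 ->
    exists s Y, proper_nonempty Y /\
    nonneg_weights (addsv w0 (vc c) s) /\ cut_weight (addsv w0 (vc c) s) Y < 3.
  move=> hl fl f0 hcut dn0.
  have sd : s0 * d != 0 by rewrite mulf_neq0.
  exists ((if 0 < s0 * d then -1 else 1) * s0), (Yf j f); split.
    exact: (Yf_proper hj f0 hl fl).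
  split; first by apply: nn; case: ifP; rewrite ?normrN normr1.
  rewrite hcut; case: ifP => h.
    by rewrite mulN1r mulNr; lra.
  rewrite mul1r; move/negbT: h; rewrite -leNgt le_eqVlt (negbTE sd) /= => h; lra.
have caseB (f : nat -> bool) S l : (1 <= l <= 3)%N -> f l -> f 0%N = false ->
    (forall s, cut_weight (addsv w0 (vc c) s) (Yf j f) = 4 + s * S) -> S = -2 * c i1 ->
    exists s Y, proper_nonempty Y /\
    nonneg_weights (addsv w0 (vc c) s) /\ cut_weight (addsv w0 (vc c) s) Y < 3.
  move=> hl fl f0 hcut hS.
  exists (1 * s0), (Yf j f); split; first exact: (Yf_proper hj f0 hl fl).
  split; first by apply: nn; rewrite normr1.
  rewrite hcut hS mul1r mulrCA s0c; lra.
pose a e := vc c (edgeN (6 * j + e)).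

have ae1' : a (i1 %% 6)%N = c i1 by [].
clear ae1.
have F1 s : cut_weight (addsv w0 (vc c) s) (Yf j (fun l => l == 1%N)) = 3 + s * (a 0%N + a 3%N + a 4%N).
  by rewrite cut_local //; rewrite -[vc c (edgeN (6 * j + 0))]/(a 0%N) -[vc c (edgeN (6 * j + 1))]/(a 1%N)
  -[vc c (edgeN (6 * j + 2))]/(a 2%N) -[vc c (edgeN (6 * j + 3))]/(a 3%N)
  -[vc c (edgeN (6 * j + 4))]/(a 4%N) -[vc c (edgeN (6 * j + 5))]/(a 5%N);
  move: (a 0%N) (a 1%N) (a 2%N) (a 3%N) (a 4%N) (a 5%N) => ? ? ? ? ? ?; rewrite /=; ring.
have F2 s : cut_weight (addsv w0 (vc c) s) (Yf j (fun l => l == 2%N)) = 3 + s * (a 1%N + a 3%N + a 5%N).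
  by rewrite cut_local //; rewrite -[vc c (edgeN (6 * j + 0))]/(a 0%N) -[vc c (edgeN (6 * j + 1))]/(a 1%N)
  -[vc c (edgeN (6 * j + 2))]/(a 2%N) -[vc c (edgeN (6 * j + 3))]/(a 3%N)
  -[vc c (edgeN (6 * j + 4))]/(a 4%N) -[vc c (edgeN (6 * j + 5))]/(a 5%N);
  move: (a 0%N) (a 1%N) (a 2%N) (a 3%N) (a 4%N) (a 5%N) => ? ? ? ? ? ?; rewrite /=; ring.
have F3 s : cut_weight (addsv w0 (vc c) s) (Yf j (fun l => l == 3%N)) = 3 + s * (a 2%N + a 4%N + a 5%N).
  by rewrite cut_local //; rewrite -[vc c (edgeN (6 * j + 0))]/(a 0%N) -[vc c (edgeN (6 * j + 1))]/(a 1%N)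
  -[vc c (edgeN (6 * j + 2))]/(a 2%N) -[vc c (edgeN (6 * j + 3))]/(a 3%N)
  -[vc c (edgeN (6 * j + 4))]/(a 4%N) -[vc c (edgeN (6 * j + 5))]/(a 5%N);
  move: (a 0%N) (a 1%N) (a 2%N) (a 3%N) (a 4%N) (a 5%N) => ? ? ? ? ? ?; rewrite /=; ring.
have F4 s : cut_weight (addsv w0 (vc c) s) (Yf j (fun l => l != 0%N)) = 3 + s * (a 0%N + a 1%N + a 2%N).
  by rewrite cut_local //; rewrite -[vc c (edgeN (6 * j + 0))]/(a 0%N) -[vc c (edgeN (6 * j + 1))]/(a 1%N)
  -[vc c (edgeN (6 * j + 2))]/(a 2%N) -[vc c (edgeN (6 * j + 3))]/(a 3%N)
  -[vc c (edgeN (6 * j + 4))]/(a 4%N) -[vc c (edgeN (6 * j + 5))]/(a 5%N);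
  move: (a 0%N) (a 1%N) (a 2%N) (a 3%N) (a 4%N) (a 5%N) => ? ? ? ? ? ?; rewrite /=; ring.
have P23 s : cut_weight (addsv w0 (vc c) s) (Yf j (fun l => (l == 2%N) || (l == 3%N))) = 4 + s * (a 1%N + a 2%N + a 3%N + a 4%N).
  by rewrite cut_local //; rewrite -[vc c (edgeN (6 * j + 0))]/(a 0%N) -[vc c (edgeN (6 * j + 1))]/(a 1%N)
  -[vc c (edgeN (6 * j + 2))]/(a 2%N) -[vc c (edgeN (6 * j + 3))]/(a 3%N)
  -[vc c (edgeN (6 * j + 4))]/(a 4%N) -[vc c (edgeN (6 * j + 5))]/(a 5%N);
  move: (a 0%N) (a 1%N) (a 2%N) (a 3%N) (a 4%N) (a 5%N) => ? ? ? ? ? ?; rewrite /=; ring.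
have P13 s : cut_weight (addsv w0 (vc c) s) (Yf j (fun l => (l == 1%N) || (l == 3%N))) = 4 + s * (a 0%N + a 2%N + a 3%N + a 5%N).
  by rewrite cut_local //; rewrite -[vc c (edgeN (6 * j + 0))]/(a 0%N) -[vc c (edgeN (6 * j + 1))]/(a 1%N)
  -[vc c (edgeN (6 * j + 2))]/(a 2%N) -[vc c (edgeN (6 * j + 3))]/(a 3%N)
  -[vc c (edgeN (6 * j + 4))]/(a 4%N) -[vc c (edgeN (6 * j + 5))]/(a 5%N);
  move: (a 0%N) (a 1%N) (a 2%N) (a 3%N) (a 4%N) (a 5%N) => ? ? ? ? ? ?; rewrite /=; ring.
have P12 s : cut_weight (addsv w0 (vc c) s) (Yf j (fun l => (l == 1%N) || (l == 2%N))) = 4 + s * (a 0%N + a 1%N + a 4%N + a 5%N).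
  by rewrite cut_local //; rewrite -[vc c (edgeN (6 * j + 0))]/(a 0%N) -[vc c (edgeN (6 * j + 1))]/(a 1%N)
  -[vc c (edgeN (6 * j + 2))]/(a 2%N) -[vc c (edgeN (6 * j + 3))]/(a 3%N)
  -[vc c (edgeN (6 * j + 4))]/(a 4%N) -[vc c (edgeN (6 * j + 5))]/(a 5%N);
  move: (a 0%N) (a 1%N) (a 2%N) (a 3%N) (a 4%N) (a 5%N) => ? ? ? ? ? ?; rewrite /=; ring.
clearbody a.
case: (eqVneq (a 0%N + a 3%N + a 4%N) 0) => d1; last exact: (caseA _ _ 1%N _ _ _ F1).
case: (eqVneq (a 1%N + a 3%N + a 5%N) 0) => d2; last exact: (caseA _ _ 2%N _ _ _ F2).
case: (eqVneq (a 2%N + a 4%N + a 5%N) 0) => d3; last exact: (caseA _ _ 3%N _ _ _ F3).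
case: (eqVneq (a 0%N + a 1%N + a 2%N) 0) => d4; last exact: (caseA _ _ 1%N _ _ _ F4).
move: (i1 %% 6)%N ae1' he1 => e ae he.
case: e ae he => [|[|[|[|[|[|e]]]]]] ae he; last by [].
- by apply: (caseB _ _ 2%N _ _ _ P23) => //; lra.
- by apply: (caseB _ _ 1%N _ _ _ P13) => //; lra.
- by apply: (caseB _ _ 1%N _ _ _ P12) => //; lra.
- by apply: (caseB _ _ 1%N _ _ _ P12) => //; lra.
- by apply: (caseB _ _ 1%N _ _ _ P13) => //; lra.
- by apply: (caseB _ _ 2%N _ _ _ P23) => //; lra.
Qed.

End Main.

End PD.
Import PD.

Lemma theorem3_aux (R : realType) (k : nat) (t : qtree R (3 * k).+1) :
  solves_mincut t ->
  exists w : Pair (3 * k).+1 -> R,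
    nonneg_weights w /\ (2 * (3 * k).+1 - 2 <= num_queries t w)%N.
Proof.
move=> hs.
case: (posnP k) => [k0|kpos].
  by exists (fun _ => 0%R); split => //; rewrite (_ : (2 * (3 * k).+1 - 2 = 0)%N) //; lia.
have h1 : ((ord0 : 'I_(3*k).+1) < (inord 1 : 'I_(3*k).+1))%N.
  by rewrite /= (@inordK (3*k) 1) //; lia.
pose p0 : Pair (3*k).+1 := exist _ (ord0, inord 1) h1.
exists (@w0 R k p0); split; first by move=> p; exact: w0_ge0.
rewrite leqNgt; apply/negP => hlt.
apply: (@no_small R k p0 t hs); lia.
Qed.

Theorem theorem3 (R : realType) (k : nat) (t : qtree R (3 * k + 1)) :
  solves_mincut t ->
  exists w : Pair (3 * k + 1) -> R,
    nonneg_weights w /\ (2 * (3 * k + 1) - 2 <= num_queries t w)%N.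
Proof.
move: t; rewrite addn1; exact: theorem3_aux.
Qed.
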